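(* Let $f:\mathbb{R}\to\mathbb{R}$ be twice continuously differentiable. Let $u_1,\dots,u_n\in\mathbb{R}$, let $J=[\min_i u_i,\max_i u_i]$ and assume $f''(v)\neq 0$ for all $v\in J$. Let $t_1<t_2$ and $x_i(t)=x_i(t_1)+f'(u_i)(t-t_1)$, $i=1,\dots,n$, be characteristic particles with $x_1(t)<x_2(t)<\dots<x_n(t)$ for all $t\in[t_1,t_2]$. For each $t$ let $u(\cdot,t)$ be the interpolant of the particles $(x_i(t),u_i)$ defined below. Then $u$ is a classical (continuous) solution of $u_t+(f(u))_x=0$: it is continuous on $\{(x,t):t\in[t_1,t_2],\ x_1(t)\le x\le x_n(t)\}$ and satisfies $u_t+(f(u))_x=0$ at every point $(x,t)$ with $t\in(t_1,t_2)$ and $x_i(t)<x<x_{i+1}(t)$ for some $i$. In particular, for all $t\in[t_1,t_2]$ and $i=1,\dots,n-1$, $$\int_{x_i(t)}^{x_{i+1}(t)}u(x,t)\,\mathrm{d}x=\big(x_{i+1}(t)-x_i(t)\big)\,a(u_i,u_{i+1}).$$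
   Context: Interpolant: given particles $(x_i,u_i)$ with $x_1<\dots<x_n$, on $[x_i,x_{i+1}]$ define $u$ as the constant $u_i$ if $u_i=u_{i+1}$; otherwise $u$ is the inverse of the strictly monotone map $v\mapsto x_i+\frac{f'(v)-f'(u_i)}{f'(u_{i+1})-f'(u_i)}(x_{i+1}-x_i)$ on the closed interval with endpoints $u_i,u_{i+1}$. For $g:\mathbb{R}\to\mathbb{R}$ write $[g(u)]_{a}^{b}=g(b)-g(a)$. For $v_1\neq v_2$ the nonlinear average is $a(v_1,v_2)=\frac{[f'(u)u-f(u)]_{v_1}^{v_2}}{[f'(u)]_{v_1}^{v_2}}=\frac{\int_{v_1}^{v_2}f''(u)u\,\mathrm{d}u}{\int_{v_1}^{v_2}f''(u)\,\mathrm{d}u}$, and $a(v,v)=v$. *)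

(* Defs.v *)
From Stdlib Require Import Reals.
From Coquelicot Require Import Coquelicot.
Open Scope R_scope.

Definition char_pos (fp : R -> R) (t1 x0 v t : R) : R := x0 + fp v * (t - t1).

(* [interp_seg fp xa xb ua ub x v]: v is the value at x of the interpolant on
   the segment [xa,xb] between particles (xa,ua), (xb,ub):
   v = ua if ua = ub, otherwise v is the (unique) point of the closed interval
   with endpoints ua, ub mapped to x by
   w |-> xa + (f'(w)-f'(ua))/(f'(ub)-f'(ua)) (xb-xa)  (i.e. v = inverse map at x). *)
Definition interp_seg (fp : R -> R) (xa xb ua ub x v : R) : Prop :=
  (ua = ub /\ v = ua) \/
  (ua <> ub /\ Rmin ua ub <= v <= Rmax ua ub /\
   xa + (fp v - fp ua) / (fp ub - fp ua) * (xb - xa) = x).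

Definition nl_avg (f fp : R -> R) (v1 v2 : R) : R :=
  if Req_EM_T v1 v2 then v1
  else ((fp v2 * v2 - f v2) - (fp v1 * v1 - f v1)) / (fp v2 - fp v1).

(* Main.v *)
Require Import Defs.
From Stdlib Require Import Reals Lra Lia Classical.
From Coquelicot Require Import Coquelicot.
Open Scope R_scope.


Lemma ballR (x y : R) (e : R) : @ball R_UniformSpace x e y <-> Rabs (y - x) < e.
Proof. unfold ball; simpl; unfold AbsRing_ball, abs, minus, plus, opp; simpl. tauto. Qed.

Lemma contR_pt (f : R -> R) x : continuous f x -> continuity_pt f x.
Proof. intro H. apply continuity_pt_filterlim. exact H. Qed.

Lemma kappa_exists (fpp : R -> R) m M : m <= M -> (forall v, continuous fpp v) ->
  (forall v, m <= v <= M -> fpp v <> 0) ->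
  exists k, 0 < k /\ forall v, m <= v <= M -> k <= Rabs (fpp v).
Proof.
  intros HmM Hc Hnz.
  destruct (continuity_ab_min (fun v => Rabs (fpp v)) m M HmM) as [mx [H1 H2]].
  { intros c _. apply contR_pt. apply continuous_Rabs_comp. apply Hc. }
  exists (Rabs (fpp mx)). split; [|exact H1].
  apply Rabs_pos_lt. apply Hnz; lra.
Qed.

Lemma lip (fp fpp : R -> R) m M k : (forall v, is_derive fp v (fpp v)) ->
  (forall v, m <= v <= M -> k <= Rabs (fpp v)) ->
  forall a b, m <= a <= M -> m <= b <= M -> k * Rabs (a - b) <= Rabs (fp a - fp b).
Proof.
  intros Hd Hk a b Ha Hb.
  destruct (MVT_gen fp b a fpp) as [c [Hc Heq]].
  - intros; apply Hd.
  - intros; apply contR_pt. refine (ex_derive_continuous fp _ _). eexists; apply Hd.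
  - rewrite Heq, Rabs_mult. apply Rmult_le_compat_r; [apply Rabs_pos|].
    apply Hk. split.
    + apply Rle_trans with (Rmin b a); [apply Rmin_glb; lra| lra].
    + apply Rle_trans with (Rmax b a); [lra| apply Rmax_lub; lra].
Qed.


Lemma shift_loc (t : R) (P : R -> Prop) : locally t P -> locally 0 (fun h => P (t + h)).
Proof.
  intros [e He]. exists e. intros y Hy. apply He. rewrite ballR in *.
  replace (t + y - t) with (y - 0) by ring. exact Hy.
Qed.

Lemma inv_deriv (fp fpp g W : R -> R) m M k t W' :
  (forall v, is_derive fp v (fpp v)) -> 0 < k ->
  (forall v, m <= v <= M -> k <= Rabs (fpp v)) ->
  locally t (fun s => m <= g s <= M /\ fp (g s) = W s) ->
  is_derive W t W' ->
  is_derive g t (W' / fpp (g t)).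
Proof.
  intros Hd Hk Hkb Hloc HWd.
  set (b0 := g t).
  assert (Hb0 := locally_singleton _ _ Hloc). simpl in Hb0. fold b0 in Hb0.
  assert (Hfpp0 : fpp b0 <> 0).
  { intro E. assert (H := Hkb b0 (proj1 Hb0)). rewrite E, Rabs_R0 in H. lra. }
  assert (cont_g : continuous g t).
  { apply filterlim_locally. intro eps.
    assert (HW : continuous W t) by (refine (ex_derive_continuous W t _); eexists; exact HWd).
    apply filterlim_locally with (eps := mkposreal (eps * k) (Rmult_lt_0_compat _ _ (cond_pos eps) Hk)) in HW.
    generalize (filter_and _ _ Hloc HW). apply filter_imp. intros s [[Hs1 Hs2] Hs3].
    rewrite ballR in *. simpl in Hs3. fold b0.
    assert (L := lip fp fpp m M k Hd Hkb (g s) b0 Hs1 (proj1 Hb0)).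
    rewrite Hs2, (proj2 Hb0) in L.
    apply Rmult_lt_reg_r with k; [exact Hk|]. lra. }
  set (rho := fun a => match Req_EM_T a b0 with left _ => fpp b0 | right _ => (fp a - fp b0) / (a - b0) end).
  assert (cont_rho : continuous rho b0).
  { apply filterlim_locally. intro eps.
    assert (D := proj1 (is_derive_Reals _ _ _) (Hd b0)).
    destruct (D eps (cond_pos eps)) as [d Hdd].
    exists d. intros y Hy. change R in y. rewrite ballR in *.
    unfold rho. destruct (Req_EM_T b0 b0) as [_|C]; [|now elim C].
    destruct (Req_EM_T y b0) as [_|Hyb].
    - rewrite Rminus_eq_0, Rabs_R0. apply cond_pos.
    - assert (Hh : y - b0 <> 0) by lra.
      specialize (Hdd (y - b0) Hh Hy). replace (b0 + (y - b0)) with y in Hdd by ring. exact Hdd. }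
  assert (rho_nz : forall a, m <= a <= M -> rho a <> 0).
  { intros a Ha. unfold rho. destruct (Req_EM_T a b0) as [_|Hab]; [exact Hfpp0|].
    assert (L := lip fp fpp m M k Hd Hkb a b0 Ha (proj1 Hb0)).
    assert (0 < Rabs (a - b0)) by (apply Rabs_pos_lt; lra).
    intro E. apply Rmult_integral in E. destruct E as [E|E].
    - rewrite E, Rabs_R0 in L. nra.
    - apply Rinv_neq_0_compat in E; [exact E| lra]. }
  assert (key : locally t (fun s => g s - g t = (W s - W t) * / rho (g s))).
  { apply (filter_imp (fun s => m <= g s <= M /\ fp (g s) = W s)); [|exact Hloc].
    intros s [Hs1 Hs2]. fold b0. rewrite <- Hs2, <- (proj2 Hb0).
    unfold rho. destruct (Req_EM_T (g s) b0) as [E|E].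
    - rewrite E. ring.
    - field. split; [lra|]. intro E2.
      assert (L := lip fp fpp m M k Hd Hkb (g s) b0 Hs1 (proj1 Hb0)).
      rewrite E2, Rabs_R0 in L. assert (0 < Rabs (g s - b0)) by (apply Rabs_pos_lt; lra). nra. }
  assert (cont_k : continuous (fun s => / rho (g s)) t).
  { apply continuous_Rinv_comp.
    - apply (continuous_comp g rho t cont_g cont_rho).
    - apply rho_nz. exact (proj1 Hb0). }
  apply is_derive_Reals.
  assert (L1 : is_lim (fun h => (W (t + h) - W t) / h) 0 W').
  { apply is_lim_spec. intro eps. 
    destruct (proj1 (is_derive_Reals _ _ _) HWd eps (cond_pos eps)) as [d Hdd].
    exists d. intros y Hy Hy0. rewrite ballR in Hy. rewrite Rminus_0_r in Hy.
    apply Hdd; assumption. }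
  assert (L2 : is_lim (fun h => / rho (g (t + h))) 0 (/ rho (g t))).
  { apply (is_lim_comp_continuous (fun h => t + h) (fun s => / rho (g s)) 0 t); [|exact cont_k].
    replace (Finite t) with (Finite (t + 0)) by (f_equal; ring).
    apply is_lim_continuity. apply derivable_continuous_pt. 
    apply derivable_pt_plus; [apply derivable_pt_const|apply derivable_pt_id]. }
  assert (L3 := is_lim_mult _ _ _ _ _ L1 L2 I). simpl in L3.
  assert (L4 : is_lim (fun h => (g (t + h) - g t) / h) 0 (W' * / rho (g t))).
  { apply (is_lim_ext_loc _ _ _ _ ) with (2 := L3).
    assert (K := shift_loc t _ key). destruct K as [e He]. exists e. intros y Hy _.
    rewrite (He y Hy). unfold Rdiv. ring. }
  apply is_lim_spec in L4.
  intros eps Heps. destruct (L4 (mkposreal eps Heps)) as [d Hdd].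
  exists d. intros h Hh0 Hh.
  assert (E : rho (g t) = fpp (g t)).
  { unfold rho. fold b0. destruct (Req_EM_T b0 b0) as [_|C]; [reflexivity|now elim C]. }
  rewrite E in Hdd. unfold Rdiv at 2. apply (Hdd h); [rewrite ballR, Rminus_0_r; exact Hh| exact Hh0].
Qed.


Lemma loc_lt {T : UniformSpace} (f g : T -> R) (p : T) :
  continuous f p -> continuous g p -> f p < g p -> locally p (fun q => f q < g q).
Proof.
  intros Hf Hg Hlt.
  assert (H : continuous (fun q => g q - f q) p).
  { apply (continuous_ext (fun q => plus (g q) (opp (f q)))); [reflexivity|].
    exact (continuous_plus _ _ p Hg (continuous_opp _ p Hf)). }
  apply filterlim_locally with (eps := mkposreal (g p - f p) ltac:(lra)) in H.
  apply (filter_imp _ _ ) with (2 := H). intros q Hq. rewrite ballR in Hq. simpl in Hq.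
  apply Rabs_def2 in Hq. lra.
Qed.

Lemma cont_cp fp t1 A v t : continuous (fun s => char_pos fp t1 A v s) t.
Proof. refine (ex_derive_continuous _ _ _). unfold char_pos. auto_derive. exact I. Qed.

Lemma cont_id t : continuous (fun s : R => s) t.
Proof. refine (ex_derive_continuous _ _ _). auto_derive. exact I. Qed.

Definition wfun (fp : R -> R) ua ub A B t1 x s :=
  fp ua + (x - char_pos fp t1 A ua s) / (char_pos fp t1 B ub s - char_pos fp t1 A ua s) * (fp ub - fp ua).

Lemma seg_basic (fp fpp : R -> R) ua ub :
  (forall v, is_derive fp v (fpp v)) -> (forall v, continuous fpp v) ->
  (forall v, Rmin ua ub <= v <= Rmax ua ub -> fpp v <> 0) -> ua <> ub ->
  exists k, 0 < k /\ (forall v, Rmin ua ub <= v <= Rmax ua ub -> k <= Rabs (fpp v)) /\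
    fp ub - fp ua <> 0.
Proof.
  intros Hd Hc HJ Hne.
  destruct (kappa_exists fpp (Rmin ua ub) (Rmax ua ub)) as [k [Hk Hkb]]; auto.
  { apply Rle_trans with ua; [apply Rmin_l|apply Rmax_l]. }
  exists k. split; [exact Hk|]. split; [exact Hkb|].
  assert (L := lip fp fpp _ _ k Hd Hkb ub ua).
  assert (Hua : Rmin ua ub <= ua <= Rmax ua ub) by (split; [apply Rmin_l|apply Rmax_l]).
  assert (Hub : Rmin ua ub <= ub <= Rmax ua ub) by (split; [apply Rmin_r|apply Rmax_r]).
  specialize (L Hub Hua). assert (0 < Rabs (ub - ua)) by (apply Rabs_pos_lt; lra).
  intro E. rewrite E, Rabs_R0 in L. nra.
Qed.

Lemma seg_w (fp : R -> R) xa xb ua ub x v :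
  ua <> ub -> fp ub - fp ua <> 0 -> xa < xb -> interp_seg fp xa xb ua ub x v ->
  Rmin ua ub <= v <= Rmax ua ub /\ fp v = fp ua + (x - xa) / (xb - xa) * (fp ub - fp ua).
Proof.
  intros Hne Hc Hx [[E _]|[_ [Hv E]]]; [now elim Hne|].
  split; [exact Hv|]. rewrite <- E. field. split; lra.
Qed.


Lemma is_derive_eqv (g : R -> R) x l l' : l = l' -> is_derive g x l -> is_derive g x l'.
Proof. intros ->; auto. Qed.

Lemma seg_pde (f fp fpp : R -> R) (Hf : forall v, is_derive f v (fp v))
  (Hfp : forall v, is_derive fp v (fpp v)) (Hfpp : forall v, continuous fpp v)
  ua ub A B t1 t2 (u : R -> R -> R)
  (HJ : forall v, Rmin ua ub <= v <= Rmax ua ub -> fpp v <> 0)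
  (Hord : forall t, t1 <= t <= t2 -> char_pos fp t1 A ua t < char_pos fp t1 B ub t)
  (Hu : forall t, t1 <= t <= t2 -> forall x, char_pos fp t1 A ua t <= x <= char_pos fp t1 B ub t ->
        interp_seg fp (char_pos fp t1 A ua t) (char_pos fp t1 B ub t) ua ub x (u x t))
  x t : t1 < t < t2 -> char_pos fp t1 A ua t < x < char_pos fp t1 B ub t ->
  exists ut fx, is_derive (fun s => u x s) t ut /\ is_derive (fun y => f (u y t)) x fx /\ ut + fx = 0.
Proof.
  intros Ht Hx.
  assert (Hloc_t : locally t (fun s => t1 < s < t2 /\
     char_pos fp t1 A ua s < x < char_pos fp t1 B ub s)).
  { repeat apply filter_and.
    - apply (loc_lt (fun _ => t1) (fun s => s)); [apply continuous_const|apply cont_id|lra].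
    - apply (loc_lt (fun s => s) (fun _ => t2)); [apply cont_id|apply continuous_const|lra].
    - apply (loc_lt (fun s => char_pos fp t1 A ua s) (fun _ => x)); [apply cont_cp|apply continuous_const|lra].
    - apply (loc_lt (fun _ => x) (fun s => char_pos fp t1 B ub s)); [apply continuous_const|apply cont_cp|lra]. }
  assert (Hloc_x : locally x (fun y => char_pos fp t1 A ua t < y < char_pos fp t1 B ub t)).
  { apply filter_and.
    - apply (loc_lt (fun _ => _) (fun s => s)); [apply continuous_const|apply cont_id|lra].
    - apply (loc_lt (fun s => s) (fun _ => _)); [apply cont_id|apply continuous_const|lra]. }
  destruct (Req_dec ua ub) as [Heq|Hne].
  -
    assert (Hc : forall s y, t1 <= s <= t2 -> char_pos fp t1 A ua s <= y <= char_pos fp t1 B ub s -> u y s = ua).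
    { intros s y Hs Hy. destruct (Hu s Hs y Hy) as [[_ E]|[E _]]; [exact E| now elim E]. }
    exists 0, 0. split; [|split; [|ring]].
    + apply (is_derive_ext_loc (fun _ => ua)); [|exact (is_derive_const ua t)].
      apply (filter_imp _ _) with (2 := Hloc_t). intros s [Hs Hxs]. symmetry. apply Hc; lra.
    + apply (is_derive_ext_loc (fun _ => f ua)); [|exact (is_derive_const (f ua) x)].
      apply (filter_imp _ _) with (2 := Hloc_x). intros y Hy. rewrite Hc; [reflexivity|lra|lra].
  - destruct (seg_basic fp fpp ua ub Hfp Hfpp HJ Hne) as [k [Hk [Hkb Hc]]].
    set (D := char_pos fp t1 B ub t - char_pos fp t1 A ua t).
    set (N := x - char_pos fp t1 A ua t).
    assert (HD : 0 < D) by (unfold D; lra).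
    assert (HWt : is_derive (fun s => wfun fp ua ub A B t1 x s) t
       ((fp ub - fp ua) * (- fp ua * D - N * (fp ub - fp ua)) / D ^ 2)).
    { unfold wfun, D, N, char_pos in *. auto_derive; [lra|]. field. lra. }
    assert (HWx : is_derive (fun y => wfun fp ua ub A B t1 y t) x ((fp ub - fp ua) / D)).
    { unfold wfun, D, N, char_pos in *. auto_derive; [lra|]. field. lra. }
    assert (Hut : is_derive (fun s => u x s) t
       ((fp ub - fp ua) * (- fp ua * D - N * (fp ub - fp ua)) / D ^ 2 / fpp (u x t))).
    { apply (inv_deriv fp fpp (fun s => u x s) (fun s => wfun fp ua ub A B t1 x s) (Rmin ua ub) (Rmax ua ub) k t _ Hfp Hk Hkb); [|exact HWt].
      apply (filter_imp _ _) with (2 := Hloc_t). intros s [Hs Hxs].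
      apply (seg_w fp _ _ ua ub x (u x s) Hne Hc); [apply Hord; lra|apply Hu; lra]. }
    assert (Hux : is_derive (fun y => u y t) x ((fp ub - fp ua) / D / fpp (u x t))).
    { apply (inv_deriv fp fpp (fun y => u y t) (fun y => wfun fp ua ub A B t1 y t) (Rmin ua ub) (Rmax ua ub) k x _ Hfp Hk Hkb); [|exact HWx].
      apply (filter_imp _ _) with (2 := Hloc_x). intros y Hy.
      apply (seg_w fp _ _ ua ub y (u y t) Hne Hc); [apply Hord; lra|apply Hu; lra]. }
    assert (Hw0 := seg_w fp _ _ ua ub x (u x t) Hne Hc (Hord t ltac:(lra)) (Hu t ltac:(lra) x ltac:(lra))).
    destruct Hw0 as [Hm Hfu]. fold D N in Hfu.
    assert (Hnz : fpp (u x t) <> 0) by (apply HJ; exact Hm).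
    eexists; eexists. split; [exact Hut|]. split.
    + exact (is_derive_comp f (fun y => u y t) x _ _ (Hf (u x t)) Hux).
    + unfold scal; simpl; unfold mult; simpl. rewrite Hfu. field. split; lra.
Qed.


Lemma minmax_cases (a b : R) : (Rmin a b = a /\ Rmax a b = b /\ a <= b) \/ (Rmin a b = b /\ Rmax a b = a /\ b <= a).
Proof. unfold Rmin, Rmax. destruct (Rle_dec a b); [left|right]; lra. Qed.

Lemma above_aux (fp fpp : R -> R) k p q v :
  (forall v, is_derive fp v (fpp v)) -> 0 < k ->
  (forall w, Rmin p q <= w <= Rmax p q -> k <= Rabs (fpp w)) ->
  Rmin p q <= v <= Rmax p q -> fp q <= fp p -> ~ (fp p < fp v).
Proof.
  intros Hd Hk Hkb Hv Hqp Hpv.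
  assert (Hcont : continuity fp).
  { intro x. apply contR_pt. refine (ex_derive_continuous fp _ _). eexists; apply Hd. }
  destruct (IVT_gen fp q v (fp p) Hcont) as [z [Hz Hfz]].
  { destruct (minmax_cases (fp q) (fp v)) as [[-> [-> ?]]|[-> [-> ?]]]; lra. }
  assert (Hzr : Rmin p q <= z <= Rmax p q).
  { destruct (minmax_cases q v) as [[E1 [E2 _]]|[E1 [E2 _]]]; rewrite E1, E2 in Hz;
    destruct (minmax_cases p q) as [[E3 [E4 _]]|[E3 [E4 _]]]; rewrite E3, E4 in *; lra. }
  assert (Hpr : Rmin p q <= p <= Rmax p q) by (split; [apply Rmin_l|apply Rmax_l]).
  assert (L := lip fp fpp _ _ k Hd Hkb z p Hzr Hpr).
  rewrite Hfz, Rminus_eq_0, Rabs_R0 in L.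
  assert (Ezp : z = p).
  { destruct (Req_dec z p) as [E|E]; [exact E|].
    assert (0 < Rabs (z - p)) by (apply Rabs_pos_lt; lra). nra. }
  subst z.
  assert (v = p).
  { destruct (minmax_cases q v) as [[E1 [E2 _]]|[E1 [E2 _]]]; rewrite E1, E2 in Hz;
    destruct (minmax_cases p q) as [[E3 [E4 _]]|[E3 [E4 _]]]; rewrite E3, E4 in *; lra. }
  subst v. lra.
Qed.

Lemma between (fp fpp : R -> R) k ua ub v :
  (forall v, is_derive fp v (fpp v)) -> 0 < k ->
  (forall w, Rmin ua ub <= w <= Rmax ua ub -> k <= Rabs (fpp w)) ->
  Rmin ua ub <= v <= Rmax ua ub ->
  Rmin (fp ua) (fp ub) <= fp v <= Rmax (fp ua) (fp ub).
Proof.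
  intros Hd Hk Hkb Hv.
  assert (Hkb' : forall w, Rmin ub ua <= w <= Rmax ub ua -> k <= Rabs (fpp w)).
  { rewrite Rmin_comm, Rmax_comm. exact Hkb. }
  assert (Hv' : Rmin ub ua <= v <= Rmax ub ua) by (rewrite Rmin_comm, Rmax_comm; exact Hv).
  assert (Hdn : forall v, is_derive (fun x => - fp x) v (- fpp v)).
  { intro w. exact (is_derive_opp fp w (fpp w) (Hd w)). }
  assert (Hkbn : forall w, Rmin ua ub <= w <= Rmax ua ub -> k <= Rabs (- fpp w)) by (intros; rewrite Rabs_Ropp; auto).
  assert (Hkbn' : forall w, Rmin ub ua <= w <= Rmax ub ua -> k <= Rabs (- fpp w)) by (intros; rewrite Rabs_Ropp; auto).
  split.
  - destruct (Rle_dec (fp ua) (fp ub)).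
    + assert (H := above_aux _ _ k ua ub v Hdn Hk Hkbn Hv). simpl in H.
      destruct (minmax_cases (fp ua) (fp ub)) as [[-> [_ ?]]|[-> [_ ?]]]; lra.
    + assert (H := above_aux _ _ k ub ua v Hdn Hk Hkbn' Hv'). simpl in H.
      destruct (minmax_cases (fp ua) (fp ub)) as [[-> [_ ?]]|[-> [_ ?]]]; lra.
  - destruct (Rle_dec (fp ua) (fp ub)).
    + assert (H := above_aux _ _ k ub ua v Hd Hk Hkb' Hv'). 
      destruct (minmax_cases (fp ua) (fp ub)) as [[_ [-> ?]]|[_ [-> ?]]]; lra.
    + assert (H := above_aux _ _ k ua ub v Hd Hk Hkb Hv).
      destruct (minmax_cases (fp ua) (fp ub)) as [[_ [-> ?]]|[_ [-> ?]]]; lra.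
Qed.


Lemma lip_cont (h : R -> R) L : 0 <= L -> (forall y z, Rabs (h y - h z) <= L * Rabs (y - z)) ->
  forall z, continuous h z.
Proof.
  intros HL Hl z. apply filterlim_locally. intro eps.
  assert (Hp : 0 < eps / (L + 1)) by (apply Rdiv_lt_0_compat; [apply cond_pos|lra]).
  exists (mkposreal _ Hp). intros y Hy. change R in y. rewrite ballR in *. simpl in Hy.
  apply Rle_lt_trans with (L * Rabs (y - z)); [apply Hl|].
  assert (Hy' : Rabs (y - z) * (L + 1) < eps).
  { assert (E : pos eps = eps / (L + 1) * (L + 1)) by (field; lra). rewrite E.
    apply Rmult_lt_compat_r; lra. }
  assert (0 <= Rabs (y - z)) by apply Rabs_pos. nra.
Qed.

Definition clamp a b y := Rmax a (Rmin y b).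

Lemma clamp_in a b y : a <= b -> a <= clamp a b y <= b.
Proof. intro. unfold clamp, Rmax, Rmin. repeat destruct Rle_dec; lra. Qed.
Lemma clamp_id a b y : a <= y <= b -> clamp a b y = y.
Proof. intro. unfold clamp, Rmax, Rmin. repeat destruct Rle_dec; lra. Qed.
Lemma clamp_lip a b y z : a <= b -> Rabs (clamp a b y - clamp a b z) <= Rabs (y - z).
Proof. intro. unfold clamp, Rmax, Rmin. repeat destruct Rle_dec; unfold Rabs; repeat destruct Rcase_abs; lra. Qed.

Lemma seg_int (f fp fpp : R -> R) (Hf : forall v, is_derive f v (fp v))
  (Hfp : forall v, is_derive fp v (fpp v)) (Hfpp : forall v, continuous fpp v)
  ua ub A B t1 t2 (u : R -> R -> R)
  (HJ : forall v, Rmin ua ub <= v <= Rmax ua ub -> fpp v <> 0)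
  (Hord : forall t, t1 <= t <= t2 -> char_pos fp t1 A ua t < char_pos fp t1 B ub t)
  (Hu : forall t, t1 <= t <= t2 -> forall x, char_pos fp t1 A ua t <= x <= char_pos fp t1 B ub t ->
        interp_seg fp (char_pos fp t1 A ua t) (char_pos fp t1 B ub t) ua ub x (u x t))
  t : t1 <= t <= t2 ->
  is_RInt (fun x => u x t) (char_pos fp t1 A ua t) (char_pos fp t1 B ub t)
    ((char_pos fp t1 B ub t - char_pos fp t1 A ua t) * nl_avg f fp ua ub).
Proof.
  intros Ht.
  assert (Hxab := Hord t Ht).
  set (xa := char_pos fp t1 A ua t) in *. set (xb := char_pos fp t1 B ub t) in *.
  assert (Hut : forall x, xa <= x <= xb -> interp_seg fp xa xb ua ub x (u x t)) by (intros; apply Hu; auto).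
  clearbody xa xb. clear Hu Hord.
  destruct (Req_dec ua ub) as [Heq|Hne].
  - subst ub. unfold nl_avg. destruct (Req_EM_T ua ua) as [_|C]; [|now elim C].
    apply (is_RInt_ext (fun _ => ua)).
    + intros x Hx. rewrite Rmin_left, Rmax_right in Hx by lra.
      destruct (Hut x ltac:(lra)) as [[_ E]|[E _]]; [symmetry; exact E|now elim E].
    + exact (is_RInt_const xa xb ua).
  - destruct (seg_basic fp fpp ua ub Hfp Hfpp HJ Hne) as [k [Hk [Hkb Hc]]].
    set (c := fp ub - fp ua) in *. set (D := xb - xa).
    assert (HD : 0 < D) by (unfold D; lra).
    assert (Hw : forall x, xa <= x <= xb -> Rmin ua ub <= u x t <= Rmax ua ub /\
                   fp (u x t) = fp ua + (x - xa) / D * c).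
    { intros x Hx. apply (seg_w fp xa xb ua ub x (u x t) Hne Hc Hxab (Hut x Hx)). }
    set (H := fun y => u (clamp xa xb y) t).
    assert (HHc : forall z, continuous H z).
    { apply (lip_cont H (Rabs (c / D) / k)).
      - apply Rdiv_le_0_compat; [apply Rabs_pos|lra].
      - intros y z. unfold H.
        assert (Hy := Hw _ (clamp_in xa xb y ltac:(lra))).
        assert (Hz := Hw _ (clamp_in xa xb z ltac:(lra))).
        assert (L := lip fp fpp _ _ k Hfp Hkb _ _ (proj1 Hy) (proj1 Hz)).
        rewrite (proj2 Hy), (proj2 Hz) in L.
        replace (fp ua + (clamp xa xb y - xa) / D * c - (fp ua + (clamp xa xb z - xa) / D * c))
          with ((clamp xa xb y - clamp xa xb z) * (c / D)) in L by (field; lra).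
        rewrite Rabs_mult in L.
        assert (Lc := clamp_lip xa xb y z ltac:(lra)).
        assert (0 <= Rabs (c / D)) by apply Rabs_pos.
        apply Rmult_le_reg_l with k; [exact Hk|].
        replace (k * (Rabs (c / D) / k * Rabs (y - z))) with (Rabs (y - z) * Rabs (c / D)) by (field; lra).
        apply Rle_trans with (1 := L). apply Rmult_le_compat_r; assumption. }
    set (g := fun v => xa + (fp v - fp ua) / c * D).
    set (dg := fun v => fpp v / c * D).
    assert (Hg : forall v, is_derive g v (dg v)).
    { intro v. 
      assert (Ho : is_derive (fun y => xa + (y - fp ua) / c * D) (fp v) (/ c * D)).
      { auto_derive; [exact I| field; exact Hc]. }
      assert (K := is_derive_comp _ fp v _ _ Ho (Hfp v)).
      unfold g, dg. refine (is_derive_eqv _ _ _ _ _ K). unfold scal; simpl; unfold mult; simpl. field. exact Hc. }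
    assert (Hdgc : forall v, continuous dg v).
    { intro v. unfold dg.
      apply (continuous_comp fpp (fun y => y / c * D) v (Hfpp v)).
      refine (ex_derive_continuous _ _ _). auto_derive. exact I. }
    assert (Hsub := is_RInt_comp H g dg ua ub (fun x _ => HHc (g x)) (fun x _ => conj (Hg x) (Hdgc x))).
    assert (Ega : g ua = xa) by (unfold g; field; exact Hc).
    assert (Egb : g ub = xb) by (unfold g, c, D; field; exact Hc).
    rewrite Ega, Egb in Hsub.
    set (F := fun v => D / c * (fp v * v - f v)).
    assert (HF : forall v, is_derive F v (dg v * v)).
    { intro v.
      assert (K1 := is_derive_mult fp (fun x => x) v _ _ (Hfp v) (is_derive_id v) Rmult_comm).
      assert (K2 := is_derive_minus _ _ v _ _ K1 (Hf v)).
      assert (K3 := is_derive_scal _ v (D / c) _ K2).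
      unfold F, dg. refine (is_derive_eqv _ _ _ _ _ K3).
      unfold minus, plus, opp, mult, one; simpl. field. exact Hc. }
    assert (Hex := is_RInt_derive F (fun v => dg v * v) ua ub (fun x _ => HF x)
      (fun x _ => continuous_mult dg (fun y => y) x (Hdgc x) (cont_id x))).
    assert (Hsub2 : is_RInt (fun y => scal (dg y) (H (g y))) ua ub (minus (F ub) (F ua))).
    { apply (is_RInt_ext (fun v => dg v * v)); [|exact Hex].
      intros v Hv.
      assert (Hv' : Rmin ua ub <= v <= Rmax ua ub) by lra.
      assert (Hb := between fp fpp k ua ub v Hfp Hk Hkb Hv').
      assert (Hgv : xa <= g v <= xb).
      { unfold g. fold c. set (th := (fp v - fp ua) / c).
        assert (Eth : th * c = fp v - fp ua) by (unfold th; field; exact Hc).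
        assert (0 <= th <= 1).
        { destruct (minmax_cases (fp ua) (fp ub)) as [[E1 [E2 Ho]]|[E1 [E2 Ho]]]; rewrite E1, E2 in Hb;
          unfold c in *; destruct (Rlt_or_le 0 c); unfold c in *; split; nra. }
        unfold D in *. nra. }
      unfold H. rewrite (clamp_id _ _ _ Hgv).
      destruct (Hw _ Hgv) as [Hr Hfr].
      assert (Efr : fp (u (g v) t) = fp v) by (rewrite Hfr; unfold g; field; split; lra).
      assert (L := lip fp fpp _ _ k Hfp Hkb _ _ Hr Hv').
      rewrite Efr, Rminus_eq_0, Rabs_R0 in L.
      assert (E : u (g v) t = v).
      { destruct (Req_dec (u (g v) t) v) as [E|E]; [exact E|].
        assert (0 < Rabs (u (g v) t - v)) by (apply Rabs_pos_lt; lra). nra. }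
      rewrite E. unfold scal; simpl; unfold mult; simpl. reflexivity. }
    assert (Eint : RInt H xa xb = minus (F ub) (F ua)).
    { rewrite <- (is_RInt_unique _ _ _ _ Hsub). apply is_RInt_unique. exact Hsub2. }
    assert (HHi : is_RInt H xa xb (RInt H xa xb)).
    { refine (RInt_correct _ _ _ _). refine (ex_RInt_continuous _ _ _ _). intros; apply HHc. }
    rewrite Eint in HHi.
    apply (is_RInt_ext H).
    + intros x Hx. rewrite Rmin_left, Rmax_right in Hx by lra. unfold H. rewrite clamp_id; [reflexivity|lra].
    + match goal with |- is_RInt _ _ _ ?v => replace v with (minus (F ub) (F ua)); [exact HHi|] end.
      unfold nl_avg. destruct (Req_EM_T ua ub) as [C|_]; [now elim Hne|].
      unfold minus, plus, opp, F, D, c; simpl. field. exact Hc.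
Qed.


Definition Dseg (fp : R -> R) t1 t2 A B ua ub (q : R * R) : Prop :=
  t1 <= snd q <= t2 /\ char_pos fp t1 A ua (snd q) <= fst q <= char_pos fp t1 B ub (snd q).

Lemma cont_snd_cp fp t1 A v (p : R * R) : continuous (fun q : R * R => char_pos fp t1 A v (snd q)) p.
Proof. destruct p as [x y]. apply (continuous_comp snd (fun s => char_pos fp t1 A v s)); [apply continuous_snd|apply cont_cp]. Qed.

Lemma seg_closed fp t1 t2 A B ua ub p : ~ Dseg fp t1 t2 A B ua ub p ->
  locally p (fun q => ~ Dseg fp t1 t2 A B ua ub q).
Proof.
  destruct p as [px pt]. unfold Dseg; simpl. intro Hn.
  assert (Cs : continuous (fun q : R * R => snd q) (px, pt)) by apply continuous_snd.
  assert (Cf : continuous (fun q : R * R => fst q) (px, pt)) by apply continuous_fst.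
  destruct (Rle_lt_dec t1 pt) as [H1|H1];
  [destruct (Rle_lt_dec pt t2) as [H2|H2];
  [destruct (Rle_lt_dec (char_pos fp t1 A ua pt) px) as [H3|H3];
  [destruct (Rle_lt_dec px (char_pos fp t1 B ub pt)) as [H4|H4]|]|]|].
  - exfalso; tauto.
  - apply (filter_imp (fun q => char_pos fp t1 B ub (snd q) < fst q)); [intros q Hq [Hd1 Hd2]; simpl in *; lra|].
    apply loc_lt; [apply cont_snd_cp|exact Cf|exact H4].
  - apply (filter_imp (fun q => fst q < char_pos fp t1 A ua (snd q))); [intros q Hq [Hd1 Hd2]; simpl in *; lra|].
    apply loc_lt; [exact Cf|apply cont_snd_cp|exact H3].
  - apply (filter_imp (fun q => t2 < snd q)); [intros q Hq [Hd1 Hd2]; simpl in *; lra|].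
    apply (loc_lt (fun _ => t2)); [apply continuous_const|exact Cs|exact H2].
  - apply (filter_imp (fun q => snd q < t1)); [intros q Hq [Hd1 Hd2]; simpl in *; lra|].
    apply (loc_lt _ (fun _ => t1)); [exact Cs|apply continuous_const|exact H1].
Qed.

Lemma cont2_w fp ua ub A B t1 x s :
  char_pos fp t1 B ub s - char_pos fp t1 A ua s <> 0 ->
  continuity_2d_pt (fun x s => wfun fp ua ub A B t1 x s) x s.
Proof.
  intro Hnz. unfold wfun, char_pos, Rdiv in *.
  repeat first [apply continuity_2d_pt_plus | apply continuity_2d_pt_minus | apply continuity_2d_pt_mult
    | apply continuity_2d_pt_id1 | apply continuity_2d_pt_id2 | apply continuity_2d_pt_const
    | apply continuity_2d_pt_inv | apply continuity_2d_pt_opp].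
  all: exact Hnz.
Qed.

Lemma seg_cont (fp fpp : R -> R)
  (Hfp : forall v, is_derive fp v (fpp v)) (Hfpp : forall v, continuous fpp v)
  ua ub A B t1 t2 (u : R -> R -> R)
  (HJ : forall v, Rmin ua ub <= v <= Rmax ua ub -> fpp v <> 0)
  (Hord : forall t, t1 <= t <= t2 -> char_pos fp t1 A ua t < char_pos fp t1 B ub t)
  (Hu : forall t, t1 <= t <= t2 -> forall x, char_pos fp t1 A ua t <= x <= char_pos fp t1 B ub t ->
        interp_seg fp (char_pos fp t1 A ua t) (char_pos fp t1 B ub t) ua ub x (u x t))
  p (eps : posreal) : Dseg fp t1 t2 A B ua ub p ->
  locally p (fun q => Dseg fp t1 t2 A B ua ub q -> Rabs (u (fst q) (snd q) - u (fst p) (snd p)) < eps).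
Proof.
  intro Hp.
  destruct (Req_dec ua ub) as [Heq|Hne].
  - assert (Hc : forall q, Dseg fp t1 t2 A B ua ub q -> u (fst q) (snd q) = ua).
    { intros q [Hq1 Hq2]. destruct (Hu _ Hq1 _ Hq2) as [[_ E]|[E _]]; [exact E|now elim E]. }
    apply (filter_imp (fun _ => True)); [|apply filter_true].
    intros q _ Hq. simpl. rewrite (Hc q Hq), (Hc p Hp), Rminus_eq_0, Rabs_R0. apply cond_pos.
  - destruct (seg_basic fp fpp ua ub Hfp Hfpp HJ Hne) as [k [Hk [Hkb Hc]]].
    destruct p as [px pt].
    assert (HD : char_pos fp t1 B ub pt - char_pos fp t1 A ua pt <> 0).
    { destruct Hp as [Hp1 _]. simpl in Hp1. assert (H := Hord pt Hp1). lra. }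
    assert (Cw := proj1 (continuity_2d_pt_filterlim _ _ _) (cont2_w fp ua ub A B t1 px pt HD)).
    apply filterlim_locally with (eps := mkposreal (eps * k) (Rmult_lt_0_compat _ _ (cond_pos eps) Hk)) in Cw.
    apply (filter_imp _ _) with (2 := Cw). intros q Hq Hdq. rewrite ballR in Hq. simpl in Hq.
    assert (Hwq := seg_w fp _ _ ua ub _ _ Hne Hc (Hord _ (proj1 Hdq)) (Hu _ (proj1 Hdq) _ (proj2 Hdq))).
    assert (Hwp := seg_w fp _ _ ua ub _ _ Hne Hc (Hord _ (proj1 Hp)) (Hu _ (proj1 Hp) _ (proj2 Hp))).
    simpl in Hwp.
    assert (L := lip fp fpp _ _ k Hfp Hkb _ _ (proj1 Hwq) (proj1 Hwp)).
    rewrite (proj2 Hwq), (proj2 Hwp) in L. unfold wfun in Hq. simpl.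
    apply Rmult_lt_reg_r with k; [exact Hk|]. lra.
Qed.


Lemma find_seg fp t1 (X0 U : nat -> R) t x :
  forall k, (1 <= k)%nat ->
  char_pos fp t1 (X0 0%nat) (U 0%nat) t <= x <= char_pos fp t1 (X0 k) (U k) t ->
  exists i, (S i <= k)%nat /\ char_pos fp t1 (X0 i) (U i) t <= x <= char_pos fp t1 (X0 (S i)) (U (S i)) t.
Proof.
  induction k as [|k IH]; intros Hk Hx; [lia|].
  destruct (Rle_lt_dec x (char_pos fp t1 (X0 k) (U k) t)) as [Hle|Hlt].
  - destruct k as [|k'].
    + exists 0%nat. split; [lia|lra].
    + destruct (IH ltac:(lia) ltac:(lra)) as [i [Hi Hix]]. exists i. split; [lia|exact Hix].
  - exists k. split; [lia|lra].
Qed.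

Theorem corollary2
  (f fp fpp : R -> R)
  (Hf : forall v, is_derive f v (fp v))
  (Hfp : forall v, is_derive fp v (fpp v))
  (Hfpp : forall v, continuous fpp v)
  (n : nat) (Hn : (0 < n)%nat) (U X0 : nat -> R)
  (HJ : forall v, (exists i j, (i < n)%nat /\ (j < n)%nat /\ U i <= v <= U j) ->
                  fpp v <> 0)
  (t1 t2 : R) (Ht : t1 < t2)
  (Hord : forall t, t1 <= t <= t2 -> forall i, (S i < n)%nat ->
            char_pos fp t1 (X0 i) (U i) t < char_pos fp t1 (X0 (S i)) (U (S i)) t)
  (u : R -> R -> R)
  (Hu0 : forall t, t1 <= t <= t2 -> forall i, (i < n)%nat ->
           u (char_pos fp t1 (X0 i) (U i) t) t = U i)
  (Hu : forall t, t1 <= t <= t2 -> forall i, (S i < n)%nat -> forall x,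
          char_pos fp t1 (X0 i) (U i) t <= x <= char_pos fp t1 (X0 (S i)) (U (S i)) t ->
          interp_seg fp (char_pos fp t1 (X0 i) (U i) t)
                        (char_pos fp t1 (X0 (S i)) (U (S i)) t)
                        (U i) (U (S i)) x (u x t)) :
  let D := fun p : R * R => t1 <= snd p <= t2 /\
             char_pos fp t1 (X0 0%nat) (U 0%nat) (snd p) <= fst p <=
             char_pos fp t1 (X0 (pred n)) (U (pred n)) (snd p) in
  (forall p, D p ->
     filterlim (fun q : R * R => u (fst q) (snd q)) (within D (locally p))
               (locally (u (fst p) (snd p))))
  /\
  (forall x t i, t1 < t < t2 -> (S i < n)%nat ->
     char_pos fp t1 (X0 i) (U i) t < x < char_pos fp t1 (X0 (S i)) (U (S i)) t ->
     exists ut fx,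
       is_derive (fun s => u x s) t ut /\
       is_derive (fun y => f (u y t)) x fx /\
       ut + fx = 0)
  /\
  (forall t i, t1 <= t <= t2 -> (S i < n)%nat ->
     is_RInt (fun x => u x t)
       (char_pos fp t1 (X0 i) (U i) t) (char_pos fp t1 (X0 (S i)) (U (S i)) t)
       ((char_pos fp t1 (X0 (S i)) (U (S i)) t - char_pos fp t1 (X0 i) (U i) t)
          * nl_avg f fp (U i) (U (S i)))).
Proof.
  intros D.
  assert (HJs : forall i, (S i < n)%nat -> forall v, Rmin (U i) (U (S i)) <= v <= Rmax (U i) (U (S i)) -> fpp v <> 0).
  { intros i Hi v Hv. apply HJ.
    destruct (minmax_cases (U i) (U (S i))) as [[E1 [E2 _]]|[E1 [E2 _]]]; rewrite E1, E2 in Hv.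
    - exists i, (S i). repeat split; try lia; lra.
    - exists (S i), i. repeat split; try lia; lra. }
  assert (Hords : forall i, (S i < n)%nat -> forall t, t1 <= t <= t2 ->
     char_pos fp t1 (X0 i) (U i) t < char_pos fp t1 (X0 (S i)) (U (S i)) t).
  { intros i Hi t Ht0. apply Hord; auto. }
  assert (Hus : forall i, (S i < n)%nat -> forall t, t1 <= t <= t2 -> forall x,
     char_pos fp t1 (X0 i) (U i) t <= x <= char_pos fp t1 (X0 (S i)) (U (S i)) t ->
     interp_seg fp (char_pos fp t1 (X0 i) (U i) t) (char_pos fp t1 (X0 (S i)) (U (S i)) t)
       (U i) (U (S i)) x (u x t)).
  { intros i Hi t Ht0 x Hx. apply Hu; auto. }
  split; [|split].
  - intros p Hp. apply filterlim_locally. intro eps. unfold within.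
    destruct (Nat.eq_dec n 1) as [Hn1|Hn1].
    + assert (Hc : forall q, D q -> u (fst q) (snd q) = U 0%nat).
      { intros q [Hq1 Hq2]. rewrite Hn1 in Hq2. simpl in Hq2.
        replace (fst q) with (char_pos fp t1 (X0 0%nat) (U 0%nat) (snd q)) by lra.
        apply Hu0; [exact Hq1|lia]. }
      apply (filter_imp (fun _ => True)); [|apply filter_true].
      intros q _ Hq. rewrite ballR, (Hc q Hq), (Hc p Hp), Rminus_eq_0, Rabs_R0. apply cond_pos.
    + assert (A : forall k, (k <= pred n)%nat -> locally p (fun q => forall i, (i < k)%nat ->
         Dseg fp t1 t2 (X0 i) (X0 (S i)) (U i) (U (S i)) q ->
         Rabs (u (fst q) (snd q) - u (fst p) (snd p)) < eps)).
      { induction k as [|k IH]; intro Hk.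
        - apply (filter_imp (fun _ => True)); [|apply filter_true]. intros; lia.
        - assert (Hk' : (S k < n)%nat) by lia.
          assert (Lk : locally p (fun q => Dseg fp t1 t2 (X0 k) (X0 (S k)) (U k) (U (S k)) q ->
                Rabs (u (fst q) (snd q) - u (fst p) (snd p)) < eps)).
          { destruct (classic (Dseg fp t1 t2 (X0 k) (X0 (S k)) (U k) (U (S k)) p)) as [Hd|Hd].
            - exact (seg_cont fp fpp Hfp Hfpp _ _ _ _ t1 t2 u (HJs k Hk') (Hords k Hk') (Hus k Hk') p eps Hd).
            - apply (filter_imp _ _) with (2 := seg_closed _ _ _ _ _ _ _ _ Hd). intros q Hq Hq'. now elim Hq. }
          apply (filter_imp _ _) with (2 := @filter_and _ (locally p) _ _ _ (IH ltac:(lia)) Lk).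
          intros q [Hq1 Hq2] i Hi Hdi.
          destruct (Nat.eq_dec i k) as [->|Hik]; [exact (Hq2 Hdi)|apply (Hq1 i); [lia|exact Hdi]]. }
      apply (filter_imp _ _) with (2 := A (pred n) (le_n _)).
      intros q Hq HDq. rewrite ballR.
      destruct HDq as [Hq1 Hq2].
      destruct (find_seg fp t1 X0 U (snd q) (fst q) (pred n) ltac:(lia) Hq2) as [i [Hi Hix]].
      apply (Hq i); [lia|]. split; assumption.
  - intros x t i Ht0 Hi Hx.
    exact (seg_pde f fp fpp Hf Hfp Hfpp _ _ _ _ t1 t2 u (HJs i Hi) (Hords i Hi) (Hus i Hi) x t Ht0 Hx).
  - intros t i Ht0 Hi.
    exact (seg_int f fp fpp Hf Hfp Hfpp _ _ _ _ t1 t2 u (HJs i Hi) (Hords i Hi) (Hus i Hi) t Ht0).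
Qed.
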